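(* The bracket $\Big[\sum_{(a,n)}P^{a,n}D_{a,n},\sum_{(b,m)}Q^{b,m}D_{b,m}\Big]=\sum_{(a,n),(b,m)\in\mathcal I\times\mathbb Z}\Big(P^{b,m}\frac{\partial Q^{a,n}}{\partial X^{b,m}}-Q^{b,m}\frac{\partial P^{a,n}}{\partial X^{b,m}}\Big)D_{a,n}$ is well defined on $\overline{\mathrm{Der}}\,\mathcal O$ and makes it a Lie algebra, and $\mathrm{Der}_w\mathcal O$ is a Lie subalgebra of $\overline{\mathrm{Der}}\,\mathcal O$.
   Context: $\mathcal I$ is a finite index set, $\mathcal O=\mathbb C[X^{a,n}]_{(a,n)\in\mathcal I\times\mathbb Z}$, $D_{a,n}=\partial/\partial X^{a,n}$. $\overline{\mathrm{Der}}\,\mathcal O=\prod_{(a,n)\in\mathcal I\times\mathbb Z}\mathcal O D_{a,n}$ is the space of possibly infinite formal sums $\sum_{(a,n)}P^{a,n}(X)D_{a,n}$. A collection $\{P^{a,n}\}_{(a,n)\in\mathcal I\times\mathbb Z}$ in $\mathcal O$ has widening gap if for every $K\ge1$, $P^{a,n}\in\mathbb C[X^{b,m}:|m|<|n|-K,\ b\in\mathcal I]$ for all $a$, for all but finitely many $n\in\mathbb Z$. $\mathrm{Der}_w\mathcal O\subset\overline{\mathrm{Der}}\,\mathcal O$ is the subspace of sums whose coefficient collection has widening gap. *)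

(* Defs.v *)
From HB Require Import structures.
From mathcomp Require Import all_boot all_order all_algebra.
From mathcomp Require Import finmap.
From mathcomp Require Import reals.
From mathcomp Require Import complex.
From mathcomp Require Import monalg.

Set Implicit Arguments.
Unset Strict Implicit.
Unset Printing Implicit Defensive.

Import Order.TTheory GRing.Theory Num.Theory.
Local Open Scope ring_scope.

(* Variables X^{a,n} are indexed by I * int;  the ground field is C = R[i]
   for an arbitrary model R of the real numbers. *)
Definition Var (I : finType) := (I * int)%type.

Definition Opoly (R : realType) (I : finType) :=
  {malg R[i][{cmonom (Var I)}]}.

Definition Xv (R : realType) (I : finType) (v : Var I) : Opoly R I :=
  << ucm v >>.

Definition pderiv (R : realType) (I : finType) (v : Var I) (p : Opoly R I)
  : Opoly R I :=
  \sum_(m <- msupp p) ((cmonom_val m v)%:R * p@_m)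
      *: << divcm m (ucm v) >>.

Definition vars (R : realType) (I : finType) (p : Opoly R I) : seq (Var I) :=
  undup (flatten [seq val (finsupp (cmonom_val m))
                 | m : {cmonom (Var I)} <- enum_fset (msupp p)]).

(* \overline{Der} O = prod_{(a,n)} O D_{a,n}: a formal sum sum P^{a,n} D_{a,n}
   is represented by its coefficient family (a,n) |-> P^{a,n}. *)
Definition DerBar (R : realType) (I : finType) := Var I -> Opoly R I.

Definition der_zero (R : realType) (I : finType) : DerBar R I := fun _ => 0.
Arguments der_zero R I : clear implicits.
Definition der_add (R : realType) (I : finType) (P Q : DerBar R I) : DerBar R I :=
  fun v => P v + Q v.
Definition der_scale (R : realType) (I : finType) (c : R[i]) (P : DerBar R I)
  : DerBar R I := fun v => c *: P v.

Definition bracket_term (R : realType) (I : finType) (P Q : DerBar R I)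
  (an bm : Var I) : Opoly R I :=
  P bm * pderiv bm (Q an) - Q bm * pderiv bm (P an).

(* the bracket: the (formally infinite) sum over (b,m), computed over the
   finitely many variables occurring in P^{a,n} or Q^{a,n} *)
Definition bracket (R : realType) (I : finType) (P Q : DerBar R I) : DerBar R I :=
  fun an => \sum_(bm <- undup (vars (P an) ++ vars (Q an)))
              bracket_term P Q an bm.

Definition poly_in_vars_lt (R : realType) (I : finType) (p : Opoly R I) (N : int)
  : Prop :=
  forall bm : Var I, bm \in vars p -> (`|bm.2|%:Z < N)%R.

Definition widening_gap (R : realType) (I : finType) (P : DerBar R I) : Prop :=
  forall K : nat, (1 <= K)%N ->
    exists S : seq int, forall n : int, n \notin S ->
      forall a : I, poly_in_vars_lt (P (a, n)) (`|n|%:Z - K%:Z).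

Definition Der_w (R : realType) (I : finType) (P : DerBar R I) : Prop :=
  widening_gap P.

(* Main.v *)
Require Import Defs.
From HB Require Import structures.
From mathcomp Require Import all_boot all_order all_algebra.
From mathcomp Require Import finmap reals complex monalg.
From mathcomp Require Import zify ring.
Import GRing.Theory Num.Theory.
Local Open Scope ring_scope.

Set Implicit Arguments.
Unset Strict Implicit.
Unset Printing Implicit Defensive.


Section Gen.
Variables (A : comRingType) (V : eqType) (d : V -> A -> A).
Hypotheses (d0 : forall v, d v 0 = 0)
  (dD : forall v x y, d v (x + y) = d v x + d v y)
  (dN : forall v x, d v (- x) = - d v x)
  (dM : forall v x y, d v (x * y) = d v x * y + x * d v y)
  (dC : forall v w x, d v (d w x) = d w (d v x)).

Definition gbr (T : seq V) (P Q : V -> A) (a : V) : A :=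
  \sum_(b <- T) (P b * d b (Q a) - Q b * d b (P a)).

Lemma d_sum v (U : Type) (s : seq U) (F : U -> A) :
  d v (\sum_(i <- s) F i) = \sum_(i <- s) d v (F i).
Proof. by apply: (big_morph (d v)); [exact: dD | exact: d0]. Qed.

Variables (T : seq V) (P Q S : V -> A) (a : V).

Definition Jt (P Q S : V -> A) :=
  \sum_(b <- T) (P b * d b (gbr T Q S a) - gbr T Q S b * d b (P a)).

Definition gt (P Q S : V -> A) b c : A :=
  P b * (d b (Q c) * d c (S a) + Q c * d b (d c (S a))
         - (d b (S c) * d c (Q a) + S c * d b (d c (Q a))))
  - (Q c * d c (S b) - S c * d c (Q b)) * d b (P a).

Lemma Jexp (P' Q' S' : V -> A) :
  Jt P' Q' S' = \sum_(b <- T) \sum_(c <- T) gt P' Q' S' b c.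
Proof.
rewrite /Jt; apply: eq_bigr => b _; rewrite /gbr d_sum mulr_sumr mulr_suml -sumrB.
by apply: eq_bigr => c _; rewrite /gt dD dN !dM.
Qed.

Definition hh b c : A :=
  P b * d b (Q c) * d c (S a)
  + P b * Q c * d b (d c (S a))
  - P b * d b (S c) * d c (Q a)
  - P b * S c * d b (d c (Q a))
  - Q c * d c (S b) * d b (P a)
  + S c * d c (Q b) * d b (P a)
  + Q b * S c * d b (d c (P a))
  - Q b * d b (P c) * d c (S a)
  - S c * d c (P b) * d b (Q a).

Lemma jacobi_alg : Jt P Q S + (Jt Q S P + Jt S P Q) = 0.
Proof.
rewrite !Jexp -!big_split /=.
have E b c : gt P Q S b c + (gt Q S P b c + gt S P Q b c) = hh b c - hh c b.
  rewrite /gt /hh (dC c b (S a)) (dC c b (Q a)) (dC c b (P a)).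
  ring.
transitivity (\sum_(b <- T) \sum_(c <- T) (hh b c - hh c b)).
  apply: eq_bigr => b _; rewrite -!big_split /=.
  by apply: eq_bigr => c _; rewrite E.
under eq_bigr => b _ do rewrite sumrB.
by rewrite sumrB exchange_big subrr.
Qed.
End Gen.


Section Gen2.
Variables (F : comRingType) (A : comAlgType F) (V : eqType) (d : V -> A -> A).
Hypotheses (dD : forall v x y, d v (x + y) = d v x + d v y)
  (dZ : forall v c x, d v (c *: x) = c *: d v x).

Lemma gbr_linl T P1 P2 Q a c1 c2 :
  gbr d T (fun v => c1 *: P1 v + c2 *: P2 v) Q a =
  c1 *: gbr d T P1 Q a + c2 *: gbr d T P2 Q a.
Proof.
rewrite /gbr !scaler_sumr -big_split; apply: eq_bigr => b _.
rewrite dD !dZ mulrDl mulrDr -!scalerAl -!scalerAr !scalerBr.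
by rewrite opprD addrACA.
Qed.

Lemma gbr_linr T P Q1 Q2 a c1 c2 :
  gbr d T P (fun v => c1 *: Q1 v + c2 *: Q2 v) a =
  c1 *: gbr d T P Q1 a + c2 *: gbr d T P Q2 a.
Proof.
rewrite /gbr !scaler_sumr -big_split; apply: eq_bigr => b _.
rewrite dD !dZ mulrDl mulrDr -!scalerAl -!scalerAr !scalerBr.
by rewrite opprD addrACA.
Qed.
End Gen2.

Section Aux.
Variables (R : realType) (I : finType).
Local Notation O := (Opoly R I).
Local Notation V := (Var I).
Implicit Types (p q : O) (v w : V) (m k : {cmonom V}).

Lemma div_mulU m v : divcm (mulcm m (ucm v)) (ucm v) = m.
Proof. by apply/eqP/cmP=> i; rewrite divcmE mulcmE ucmE addnK. Qed.

Lemma divU_eq m k v : (0 < k v)%N -> divcm k (ucm v) = m -> k = mulcm m (ucm v).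
Proof.
move=> kv <-; apply/eqP/cmP=> i; rewrite mulcmE divcmE ucmE.
by case: (eqVneq v i) => [<-|_]; rewrite ?subn0 ?addn0 // subnK.
Qed.

Lemma pderivE v p m :
  (pderiv v p)@_m = ((m v).+1)%:R * p@_(mulcm m (ucm v)).
Proof.
rewrite /pderiv raddf_sum /=.
set k0 := mulcm m (ucm v).
have -> : \sum_(k <- msupp p) (((k v)%:R * p@_k) *: (<< divcm k (ucm v) >> : O))@_m
   = \sum_(k <- msupp p) ((k0 == k)%:R * ((m v).+1%:R * p@_k)).
  apply: eq_bigr => k _; rewrite mcoeffZ mcoeffU1.
  have [<-|nk] := eqVneq k0 k.
    by rewrite div_mulU eqxx /k0 mulcmE ucmE eqxx addn1 !mulr1 mul1r.
  rewrite mul0r; have [kv0|kvp] := eqVneq (k v) 0%N.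
    by rewrite kv0 !mul0r.
  case: eqVneq => [e|_]; last by rewrite mulr0.
  by case/eqP: nk; rewrite (divU_eq _ e) // lt0n.
have [kin|kout] := boolP (k0 \in msupp p).
  rewrite (bigD1_seq k0) ?fset_uniq //= eqxx mul1r big1 ?addr0 //.
  by move=> k nk; rewrite eq_sym (negbTE nk) mul0r.
rewrite big1_seq ?(mcoeff_outdom kout) ?mulr0 // => k /= kin.
by case: eqVneq kin kout => [->->|]; rewrite ?mul0r.
Qed.


Fact pd_key : unit. Proof. by []. Qed.
Definition pd := locked_with pd_key (@pderiv R I).
Lemma pdE : @pderiv R I = pd. Proof. by rewrite /pd unlock. Qed.

Lemma pdC v p m : (pd v p)@_m = ((m v).+1)%:R * p@_(mulcm m (ucm v)).
Proof. by rewrite -pdE pderivE. Qed.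

Lemma pdD v p q : pd v (p + q) = pd v p + pd v q.
Proof. by apply/malgP=> m; rewrite mcoeffD !pdC mcoeffD mulrDr. Qed.
Lemma pdZ v c p : pd v (c *: p) = c *: pd v p.
Proof. by apply/malgP=> m; rewrite mcoeffZ !pdC mcoeffZ mulrCA. Qed.
Lemma pd0 v : pd v (0 : O) = 0.
Proof. by apply/malgP=> m; rewrite pdC !mcoeff0 mulr0. Qed.
Lemma pdN v p : pd v (- p) = - pd v p.
Proof. by apply/malgP=> m; rewrite mcoeffN !pdC mcoeffN mulrN. Qed.
Lemma pdB v p q : pd v (p - q) = pd v p - pd v q.
Proof. by rewrite pdD pdN. Qed.
Lemma pd_sum v (T : Type) (s : seq T) (F : T -> O) :
  pd v (\sum_(i <- s) F i) = \sum_(i <- s) pd v (F i).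
Proof. by apply: (big_morph (pd v)); [exact: pdD | exact: pd0]. Qed.

Lemma pd_comm v w p : pd v (pd w p) = pd w (pd v p).
Proof.
apply/malgP=> m; rewrite !pdC !mulrA -!natrM !mulcmE !ucmE.
have -> : mulcm (mulcm m (ucm v)) (ucm w) = mulcm (mulcm m (ucm w)) (ucm v).
  by rewrite -!mulcmA (mulcmC (ucm v)).
congr (_%:R * _); rewrite (eq_sym w); case: eqVneq => [->|_] //.
by rewrite !addn0 mulnC.
Qed.

Fact mon_key : unit. Proof. by []. Qed.
Definition mon : R[i] -> {cmonom V} -> O := locked_with mon_key (fun c k => << c *g k >>).
Lemma monE c k : mon c k = << c *g k >>. Proof. by rewrite /mon unlock. Qed.

Lemma mcoeff_mon c k m : (mon c k)@_m = c *+ (k == m).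
Proof. by rewrite monE mcoeffU. Qed.

Lemma monP c k (x : O) : (forall m, x@_m = c *+ (k == m)) -> x = mon c k.
Proof. by move=> h; apply/malgP=> m; rewrite h mcoeff_mon. Qed.

Lemma mon_mul a b k1 k2 : mon a k1 * mon b k2 = mon (a * b) (mulcm k1 k2).
Proof. by rewrite !monE malgM_def fgmulUU. Qed.

Lemma mon0 k : mon 0 k = 0.
Proof. by rewrite monE monalgU0. Qed.

Lemma monD a b k : mon (a + b) k = mon a k + mon b k.
Proof. by rewrite !monE monalgUD. Qed.

Lemma mon_expand p : p = \sum_(k <- msupp p) mon p@_k k.
Proof.
rewrite [LHS]monalgE; apply: eq_bigr => k _; by rewrite monE.
Qed.

Lemma pdU v c k :
  pd v (mon c k) = mon ((k v)%:R * c) (divcm k (ucm v)).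
Proof.
apply/monP=> m; rewrite pdC !mcoeff_mon.
have [->|nk] := eqVneq k (mulcm m (ucm v)).
  by rewrite div_mulU !eqxx mulcmE ucmE eqxx addn1 mulr1n mulr1n.
rewrite mulr0n mulr0.
have [kv0|kvp] := eqVneq (k v) 0%N; first by rewrite kv0 mul0r mul0rn.
case: (eqVneq (divcm k (ucm v)) m) => [e|_]; last by rewrite mulr0n.
by case/eqP: nk; rewrite (divU_eq _ e) // lt0n.
Qed.

Lemma mulcm_divU k1 k2 v : (0 < k1 v)%N ->
  mulcm (divcm k1 (ucm v)) k2 = divcm (mulcm k1 k2) (ucm v).
Proof.
move=> h; apply/eqP/cmP=> i; rewrite !mulcmE !divcmE mulcmE ucmE.
case: (eqVneq v i) => [<-|_] /=; last by rewrite !subn0.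
by rewrite addnC addnBA // addnC.
Qed.

Lemma pdM_UU v (a b : R[i]) k1 k2 :
  pd v (mon a k1 * mon b k2) =
  pd v (mon a k1) * mon b k2 + mon a k1 * pd v (mon b k2).
Proof.
rewrite mon_mul !pdU !mon_mul mulcmE natrD mulrDl monD.
congr (_ + _).
  have [->|h] := eqVneq (k1 v) 0%N; first by rewrite !mul0r !mon0.
  by rewrite mulcm_divU ?lt0n // mulrA.
have [->|h] := eqVneq (k2 v) 0%N; first by rewrite !mul0r mulr0 !mon0.
rewrite [mulcm k1 (divcm _ _)]mulcmC mulcm_divU ?lt0n // [mulcm k2 k1]mulcmC; congr mon.
by rewrite mulrCA mulrA.
Qed.

Lemma pdM v p q : pd v (p * q) = pd v p * q + p * pd v q.
Proof.
have H (s1 s2 : seq {cmonom V}) (f g : {cmonom V} -> R[i]) :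
  pd v ((\sum_(i <- s1) mon (f i) i) * \sum_(j <- s2) mon (g j) j) =
  pd v (\sum_(i <- s1) mon (f i) i) * (\sum_(j <- s2) mon (g j) j) +
  (\sum_(i <- s1) mon (f i) i) * pd v (\sum_(j <- s2) mon (g j) j).
  rewrite big_distrl pd_sum /= pd_sum big_distrl /= big_distrl /=.
  rewrite -big_split /=; apply: eq_bigr => i _.
  rewrite big_distrr pd_sum /= big_distrr /= pd_sum big_distrr /= -big_split /=.
  by apply: eq_bigr => j _; rewrite pdM_UU.
by rewrite (mon_expand p) (mon_expand q) H.
Qed.

Lemma varsP v p : reflect (exists2 m, m \in msupp p & m v != 0%N) (v \in vars p).
Proof.
rewrite /vars mem_undup; apply: (iffP flatten_mapP) => [[m mi vi]|[m mi vi]].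
  by exists m => //; rewrite cmE_neq0.
by exists m => //; rewrite -cmE_neq0.
Qed.

Definition dep p (A : seq V) := {subset vars p <= A}.

Lemma depP p A :
  (forall m, m \in msupp p -> forall v, m v != 0%N -> v \in A) -> dep p A.
Proof. by move=> h v /varsP [m mi nz]; exact: h nz. Qed.

Lemma depE p A m v : dep p A -> m \in msupp p -> m v != 0%N -> v \in A.
Proof. by move=> h mi nz; apply: h; apply/varsP; exists m. Qed.

Lemma dep0 A : dep 0 A.
Proof. by apply: depP => m; rewrite msupp0. Qed.

Lemma depW p A B : dep p A -> {subset A <= B} -> dep p B.
Proof. by move=> h s v /h /s. Qed.

Lemma dep_vars p : dep p (vars p).
Proof. by []. Qed.

Lemma depD p q A : dep p A -> dep q A -> dep (p + q) A.
Proof.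
move=> hp hq; apply: depP => m /(fsubsetP (msuppD_le _ _)).
by rewrite in_fsetU => /orP[] mi v nz; [exact: depE hp mi nz|exact: depE hq mi nz].
Qed.

Lemma depN p A : dep p A -> dep (- p) A.
Proof. by move=> hp; apply: depP => m; rewrite msuppN => mi v nz; exact: depE hp mi nz. Qed.

Lemma depB p q A : dep p A -> dep q A -> dep (p - q) A.
Proof. by move=> hp hq; apply: depD => //; apply: depN. Qed.

Lemma depZ c p A : dep p A -> dep (c *: p) A.
Proof. by move=> hp; apply: depP => m /(fsubsetP (msuppZ_le _ _)) mi v nz; exact: depE hp mi nz. Qed.

Lemma depM p q A : dep p A -> dep q A -> dep (p * q) A.
Proof.
move=> hp hq; apply: depP => m /msuppM_le [k1 [k2 [k1i k2i ->]]] v.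
rewrite [X in X != _]mulcmE addn_eq0 negb_and => /orP[] nz.
  exact: depE hp k1i nz.
exact: depE hq k2i nz.
Qed.

Lemma dep_sum (T : eqType) (s : seq T) (F : T -> O) (A : seq V) :
  (forall i, i \in s -> dep (F i) A) -> dep (\sum_(i <- s) F i) A.
Proof.
move=> h; rewrite big_seq; apply: (big_ind (fun x => dep x A)) => //.
  exact: dep0.
by move=> x y; exact: depD.
Qed.

Lemma dep_pd v p A : dep p A -> dep (pd v p) A.
Proof.
move=> hp; apply: depP => m; rewrite -mcoeff_neq0 pdC mulf_eq0 negb_or => /andP[_].
rewrite mcoeff_neq0 => mi w nz; apply: (depE hp mi).
by rewrite mulcmE addn_eq0 negb_and nz.
Qed.

Lemma pd_out v p : v \notin vars p -> pd v p = 0.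
Proof.
move=> nv; apply/malgP=> m; rewrite pdC mcoeff0.
have [mi|mo] := boolP (mulcm m (ucm v) \in msupp p).
  case/negP: nv; apply/varsP; exists (mulcm m (ucm v)) => //.
  by rewrite mulcmE ucmE eqxx addn1.
by rewrite (mcoeff_outdom mo) mulr0.
Qed.

Lemma sum_supp (s t : seq V) (F : V -> O) : uniq s -> uniq t ->
  (forall x, x \notin s -> F x = 0) -> (forall x, x \notin t -> F x = 0) ->
  \sum_(x <- s) F x = \sum_(x <- t) F x.
Proof.
move=> us ut hs ht.
have H (s1 t1 : seq V) : (forall x, x \notin t1 -> F x = 0) ->
    \sum_(x <- s1) F x = \sum_(x <- filter (mem t1) s1) F x.
  move=> h1; rewrite big_filter [RHS]big_mkcond /=; apply: eq_bigr => x _.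
  by case: ifP => // /negbT /h1.
rewrite (H s t ht) (H t s hs); apply: perm_big; apply: uniq_perm.
- exact: filter_uniq.
- exact: filter_uniq.
by move=> x; rewrite !mem_filter andbC.
Qed.

Definition brT (T : seq V) (P Q : DerBar R I) (a : V) : O := gbr pd T P Q a.

Lemma bracket_pd P Q a : bracket P Q a =
  \sum_(b <- undup (vars (P a) ++ vars (Q a))) (P b * pd b (Q a) - Q b * pd b (P a)).
Proof. by rewrite /bracket /bracket_term pdE. Qed.

Lemma bracketE (T : seq V) P Q a : uniq T -> dep (P a) T -> dep (Q a) T ->
  bracket P Q a = brT T P Q a.
Proof.
move=> uT hP hQ; rewrite bracket_pd /brT /gbr; apply: sum_supp => //.
  exact: undup_uniq.
  move=> x; rewrite mem_undup mem_cat negb_or => /andP[h1 h2].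
  by rewrite !pd_out // !mulr0 subrr.
move=> x xT; rewrite !pd_out ?mulr0 ?subrr //;
  first [exact: (contra (@hQ x) xT) | exact: (contra (@hP x) xT)].
Qed.



Fact brk_key : unit. Proof. by []. Qed.
Definition brk := locked_with brk_key (@bracket R I).
Lemma brkE : @bracket R I = brk. Proof. by rewrite /brk unlock. Qed.

Lemma brkT (T : seq V) P Q a : uniq T -> dep (P a) T -> dep (Q a) T ->
  brk P Q a = brT T P Q a.
Proof. by rewrite -brkE; apply: bracketE. Qed.

Lemma Jclaim (T : seq V) (X Y Z : DerBar R I) a : uniq T ->
  dep (X a) T -> dep (Y a) T -> dep (Z a) T ->
  (forall b, b \in vars (X a) -> dep (Y b) T /\ dep (Z b) T) ->
  (forall b, b \in vars (Z a) -> dep (Y b) T) ->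
  (forall b, b \in vars (Y a) -> dep (Z b) T) ->
  brk X (brk Y Z) a = Jt pd T a X Y Z.
Proof.
move=> uT hXa hYa hZa hX hZ hY.
have eYZ := brkT uT hYa hZa.
have dYZ : dep (brk Y Z a) T.
  rewrite eYZ /brT /gbr; apply: dep_sum => b _; apply: depB.
    have [bi|bo] := boolP (b \in vars (Z a)).
      by apply: depM; [exact: hZ | exact: dep_pd].
    by rewrite (pd_out bo) mulr0; exact: dep0.
  have [bi|bo] := boolP (b \in vars (Y a)).
    by apply: depM; [exact: hY | exact: dep_pd].
  by rewrite (pd_out bo) mulr0; exact: dep0.
rewrite (brkT uT hXa dYZ) /brT /gbr /Jt; apply: eq_bigr => b _.
rewrite eYZ.
have [bi|bo] := boolP (b \in vars (X a)).
  by have [h1 h2] := hX b bi; rewrite (brkT uT h1 h2).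
by rewrite (pd_out bo) !mulr0.
Qed.

Definition pivl p N := poly_in_vars_lt p N.

Lemma pivl_cat p q r N : dep r (vars p ++ vars q) -> pivl p N -> pivl q N -> pivl r N.
Proof. by move=> h hp hq bm /h; rewrite mem_cat => /orP[/hp|/hq]. Qed.

Lemma sub_catl (s1 s2 : seq V) : {subset s1 <= s1 ++ s2}.
Proof. by move=> x xi; rewrite mem_cat xi. Qed.
Lemma sub_catr (s1 s2 : seq V) : {subset s2 <= s1 ++ s2}.
Proof. by move=> x xi; rewrite mem_cat xi orbT. Qed.

Lemma pivl0 N : pivl 0 N.
Proof. by move=> bm /(dep0 [::]). Qed.
Lemma pivlD p q N : pivl p N -> pivl q N -> pivl (p + q) N.
Proof.
move=> hp hq; apply: (pivl_cat _ hp hq); apply: depD.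
  by move=> x xi; rewrite mem_cat xi.
by move=> x xi; rewrite mem_cat xi orbT.
Qed.
Lemma pivlB p q N : pivl p N -> pivl q N -> pivl (p - q) N.
Proof.
move=> hp hq; apply: (pivl_cat _ hp hq); apply: depB.
  by move=> x xi; rewrite mem_cat xi.
by move=> x xi; rewrite mem_cat xi orbT.
Qed.
Lemma pivlM p q N : pivl p N -> pivl q N -> pivl (p * q) N.
Proof.
move=> hp hq; apply: (pivl_cat _ hp hq); apply: depM.
  by move=> x xi; rewrite mem_cat xi.
by move=> x xi; rewrite mem_cat xi orbT.
Qed.
Lemma pivlZ c p N : pivl p N -> pivl (c *: p) N.
Proof. by move=> hp bm /(depZ (c:=c) (@dep_vars p)) /hp. Qed.
Lemma pivl_pd v p N : pivl p N -> pivl (pd v p) N.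
Proof. by move=> hp bm /(dep_pd (v:=v) (@dep_vars p)) /hp. Qed.
Lemma pivl_sum (s : seq V) (F : V -> O) N :
  (forall i, i \in s -> pivl (F i) N) -> pivl (\sum_(i <- s) F i) N.
Proof.
move=> h; rewrite big_seq; apply: (big_ind (fun x => pivl x N)) => //.
  exact: pivl0.
by move=> x y; apply: pivlD.
Qed.

Lemma bound_seq (s : seq V) : exists B : nat, forall v, v \in s -> (`|v.2| < B)%N.
Proof.
elim: s => [|x s [B hB]]; first by exists 0%N.
exists (maxn B (`|x.2|).+1) => v; rewrite in_cons => /orP[/eqP->|/hB h].
  by rewrite leq_max leqnn orbT.
by rewrite leq_max h.
Qed.

Definition rangeZ (N : nat) : seq int :=
  [seq Posz i | i <- iota 0 N] ++ [seq - Posz i | i <- iota 0 N].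

Lemma rangeZ_out N n : n \notin rangeZ N -> (N <= `|n|)%N.
Proof.
apply: contraR; rewrite -ltnNge => h; rewrite mem_cat; case: n h => k /= h.
  by apply/orP; left; apply/mapP; exists k => //; rewrite mem_iota.
apply/orP; right; apply/mapP; exists k.+1; first by rewrite mem_iota.
by rewrite NegzE.
Qed.
End Aux.

Lemma arith1 (x : nat) (n : int) (B K : nat) : (B + K <= `|n|)%N -> (x < B)%N -> (x%:Z < `|n|%:Z - K%:Z)%R.
Proof. lia. Qed.
Lemma arith2 (x y z : int) (K : nat) : (x < y - K%:Z)%R -> (y < z - K%:Z)%R -> (x < z - K%:Z)%R.
Proof. lia. Qed.
From Stdlib Require Import FunctionalExtensionality.
Unset Implicit Arguments.
Set Strict Implicit.

Theorem lemma3p5 (R : realType) (I : finType) :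
  (forall (P Q : DerBar R I) (an : Var I),
      (exists s : seq (Var I),
          forall bm, bm \notin s -> bracket_term P Q an bm = 0)
   /\ (forall s : seq (Var I), uniq s ->
          (forall bm, bm \notin s -> bracket_term P Q an bm = 0) ->
          bracket P Q an = \sum_(bm <- s) bracket_term P Q an bm))
  /\ (forall (P1 P2 Q : DerBar R I) (c1 c2 : R[i]),
        bracket (der_add (der_scale c1 P1) (der_scale c2 P2)) Q
        = der_add (der_scale c1 (bracket P1 Q)) (der_scale c2 (bracket P2 Q)))
  /\ (forall (P Q1 Q2 : DerBar R I) (c1 c2 : R[i]),
        bracket P (der_add (der_scale c1 Q1) (der_scale c2 Q2))
        = der_add (der_scale c1 (bracket P Q1)) (der_scale c2 (bracket P Q2)))
  /\ (forall P : DerBar R I, bracket P P = der_zero R I)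
  /\ (forall P Q S : DerBar R I,
        der_add (bracket P (bracket Q S))
          (der_add (bracket Q (bracket S P)) (bracket S (bracket P Q)))
        = der_zero R I)
  /\ Der_w (der_zero R I)
  /\ (forall P Q : DerBar R I, Der_w P -> Der_w Q -> Der_w (der_add P Q))
  /\ (forall (c : R[i]) (P : DerBar R I), Der_w P -> Der_w (der_scale c P))
  /\ (forall P Q : DerBar R I, Der_w P -> Der_w Q -> Der_w (bracket P Q)).
Proof.
split.
  move=> P Q an; split.
    exists (undup (vars (P an) ++ vars (Q an))) => bm.
    rewrite mem_undup mem_cat negb_or => /andP[h1 h2].
    by rewrite /bracket_term pdE !pd_out // !mulr0 subrr.
  move=> s us hs; rewrite /bracket; apply: sum_supp => //.
    exact: undup_uniq.
  move=> bm; rewrite mem_undup mem_cat negb_or => /andP[h1 h2].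
  by rewrite /bracket_term pdE !pd_out // !mulr0 subrr.
split.
  move=> P1 P2 Q c1 c2; apply: functional_extensionality => an.
  rewrite brkE /der_add /der_scale.
  set T := undup (vars (P1 an) ++ vars (P2 an) ++ vars (Q an)).
  have uT : uniq T := undup_uniq _.
  have s1 : dep (P1 an) T by move=> x xi; rewrite mem_undup !mem_cat xi.
  have s2 : dep (P2 an) T by move=> x xi; rewrite mem_undup !mem_cat xi orbT.
  have s3 : dep (Q an) T by move=> x xi; rewrite mem_undup !mem_cat xi !orbT.
  have s0 : dep ((fun v => c1 *: P1 v + c2 *: P2 v) an) T.
    by apply: depD; apply: depZ.
  rewrite (brkT uT s0 s3) (brkT uT s1 s3) (brkT uT s2 s3) /brT.
  by apply: gbr_linl; [exact: pdD | exact: pdZ].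
split.
  move=> P Q1 Q2 c1 c2; apply: functional_extensionality => an.
  rewrite brkE /der_add /der_scale.
  set T := undup (vars (Q1 an) ++ vars (Q2 an) ++ vars (P an)).
  have uT : uniq T := undup_uniq _.
  have s1 : dep (Q1 an) T by move=> x xi; rewrite mem_undup !mem_cat xi.
  have s2 : dep (Q2 an) T by move=> x xi; rewrite mem_undup !mem_cat xi orbT.
  have s3 : dep (P an) T by move=> x xi; rewrite mem_undup !mem_cat xi !orbT.
  have s0 : dep ((fun v => c1 *: Q1 v + c2 *: Q2 v) an) T.
    by apply: depD; apply: depZ.
  rewrite (brkT uT s3 s0) (brkT uT s3 s1) (brkT uT s3 s2) /brT.
  by apply: gbr_linr; [exact: pdD | exact: pdZ].
split.
  move=> P; apply: functional_extensionality => an.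
  by rewrite /bracket big1 // => bm _; rewrite /bracket_term subrr.
split.
  move=> P Q S; apply: functional_extensionality => a.
  rewrite brkE /der_add /der_zero.
  set T0 := vars (P a) ++ vars (Q a) ++ vars (S a).
  set T := undup (T0 ++ flatten [seq vars (P b) ++ vars (Q b) ++ vars (S b) | b <- T0]).
  have uT : uniq T := undup_uniq _.
  have inT0 x : x \in T0 -> x \in T by move=> xi; rewrite mem_undup mem_cat xi.
  have iP b : b \in vars (P a) -> b \in T0 by move=> bi; rewrite !mem_cat bi.
  have iQ b : b \in vars (Q a) -> b \in T0 by move=> bi; rewrite !mem_cat bi orbT.
  have iS b : b \in vars (S a) -> b \in T0 by move=> bi; rewrite !mem_cat bi !orbT.
  have hPa : dep (P a) T by move=> x /iP /inT0.
  have hQa : dep (Q a) T by move=> x /iQ /inT0.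
  have hSa : dep (S a) T by move=> x /iS /inT0.
  have hb b : b \in T0 -> [/\ dep (P b) T, dep (Q b) T & dep (S b) T].
    move=> bT0; split=> x xi; rewrite mem_undup mem_cat; apply/orP; right;
      apply/flatten_mapP; exists b => //; rewrite !mem_cat xi ?orbT //.
  rewrite (Jclaim uT hPa hQa hSa); first last.
  - by move=> b /iQ /hb [].
  - by move=> b /iS /hb [].
  - by move=> b /iP /hb [].
  rewrite (Jclaim uT hQa hSa hPa); first last.
  - by move=> b /iS /hb [].
  - by move=> b /iP /hb [].
  - by move=> b /iQ /hb [].
  rewrite (Jclaim uT hSa hPa hQa); first last.
  - by move=> b /iP /hb [].
  - by move=> b /iQ /hb [].
  - by move=> b /iS /hb [].
  apply: jacobi_alg.
  - exact: pd0.
  - exact: pdD.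
  - exact: pdN.
  - exact: pdM.
  - exact: pd_comm.
split.
  by move=> K _; exists [::] => n _ a; exact: pivl0.
split.
  move=> P Q hP hQ K K1; have [SP hSP] := hP K K1; have [SQ hSQ] := hQ K K1.
  exists (SP ++ SQ) => n; rewrite mem_cat negb_or => /andP[nP nQ] a.
  by apply: pivlD; [exact: hSP | exact: hSQ].
split.
  move=> c P hP K K1; have [SP hSP] := hP K K1.
  by exists SP => n nP a; apply: pivlZ; exact: hSP.
move=> P Q hP hQ K K1; have [SP hSP] := hP K K1; have [SQ hSQ] := hQ K K1.
set Lv := flatten [seq flatten [seq vars (P (b, m)) ++ vars (Q (b, m)) | m <- SP ++ SQ]
                  | b <- enum I].
have [B hB] := bound_seq Lv.
exists (SP ++ SQ ++ rangeZ (B + K)) => n.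
rewrite mem_cat negb_or => /andP[nP]; rewrite mem_cat negb_or => /andP[nQ nR] a.
have hn := rangeZ_out nR.
have HX (X : DerBar R I) (SX : seq int) :
    (forall n, n \notin SX -> forall a, pivl (X (a, n)) (`|n|%:Z - K%:Z)) ->
    (forall b m v, m \in SX -> v \in vars (X (b, m)) -> (`|v.2| < B)%N) ->
    forall bm, (`|bm.2|%:Z < `|n|%:Z - K%:Z)%R -> pivl (X bm) (`|n|%:Z - K%:Z).
  move=> hX hXB [b m] /= hm v vi.
  have [mi|mo] := boolP (m \in SX).
    by apply: arith1 hn (hXB b m v mi vi).
  by apply: arith2 (hX m mo b v vi) hm.
have HP : forall b m v, m \in SP -> v \in vars (P (b, m)) -> (`|v.2| < B)%N.
  move=> b m v mi vi; apply: hB; apply/flatten_mapP; exists b; first by rewrite mem_enum.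
  by apply/flatten_mapP; exists m; rewrite ?mem_cat ?mi ?vi.
have HQ : forall b m v, m \in SQ -> v \in vars (Q (b, m)) -> (`|v.2| < B)%N.
  move=> b m v mi vi; apply: hB; apply/flatten_mapP; exists b; first by rewrite mem_enum.
  by apply/flatten_mapP; exists m; rewrite ?mem_cat ?mi ?vi ?orbT.
rewrite /pivl bracket_pd -/(pivl _ _); apply: pivl_sum => b _; apply: pivlB.
  have [bi|bo] := boolP (b \in vars (Q (a, n))).
    apply: pivlM; first exact: (HX P SP hSP HP b (hSQ n nQ a b bi)).
    exact: (pivl_pd (hSQ n nQ a)).
  by rewrite (pd_out bo) mulr0; exact: pivl0.
have [bi|bo] := boolP (b \in vars (P (a, n))).
  apply: pivlM; first exact: (HX Q SQ hSQ HQ b (hSP n nP a b bi)).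
  exact: (pivl_pd (hSP n nP a)).
by rewrite (pd_out bo) mulr0; exact: pivl0.
Qed.
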